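(* Let $P^1,\dots,P^4\in\mathbb{R}^n$ be in general position, let $Q^0$ be the equidistant point from $P^1,\dots,P^4$ with barycentric coordinate $\boldsymbol\lambda^0$, and suppose $\lambda^0_1<0$, $\lambda^0_2<0$, $\lambda^0_3\ge0$, $\lambda^0_4\ge0$. Let $Q^{1(1)}=\pi(Q^0|L(P^2,P^3,P^4))$ and $Q^{1(2)}=\pi(Q^0|L(P^1,P^3,P^4))$, with barycentric coordinates $\boldsymbol\lambda^{1(1)},\boldsymbol\lambda^{1(2)}$ about $P^1,\dots,P^4$, and suppose $\lambda^{1(2)}_1<0$. Suppose further $\lambda^{1(1)}_2<0$, $\lambda^{1(1)}_3\ge0$, $\lambda^{1(1)}_4\ge0$, and let $Q^2=\pi(Q^{1(1)}|L(P^3,P^4))$. Then the center of the smallest enclosing circle of $P^1,\dots,P^4$ is $Q^\ast=Q^2$ and its radius is $d^\ast=d(P^3,Q^2)$.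
   Context: $d$ is the Euclidean distance. Points are in general position if $P^2-P^1,\dots,P^m-P^1$ are linearly independent. $L(S^1,\dots,S^r)$ is the affine subspace spanned by the points; $\pi(Q'|L)$ is the orthogonal projection onto the affine subspace $L$. The barycentric coordinate of $Q\in L(P^1,\dots,P^m)$ is the unique $\boldsymbol\lambda$ with $\sum_i\lambda_i=1$, $Q=\sum_i\lambda_iP^i$. The equidistant point is the unique $Q^0\in L(P^1,\dots,P^m)$ with all $d(P^i,Q^0)$ equal. The smallest enclosing circle has center $Q^\ast$ attaining $\min_Q\max_i d(P^i,Q)$ and radius $d^\ast$ equal to this minimum. *)

(* Defs.v *)
From HB Require Import structures.
From mathcomp Require Import all_boot all_order all_algebra.
Set Implicit Arguments. Unset Strict Implicit. Unset Printing Implicit Defensive.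
Import Order.TTheory GRing.Theory Num.Theory.
Local Open Scope ring_scope.

Section Geom.
Variables (R : rcfType) (n : nat).
Notation pt := 'rV[R]_n.

Definition dot (u v : pt) : R := \sum_(j < n) u 0 j * v 0 j.
Definition dist (x y : pt) : R := Num.sqrt (dot (x - y) (x - y)).

Definition general_position (S : seq pt) : Prop :=
  row_free (\matrix_(i < (size S).-1, j < n) (S`_i.+1 0 j - S`_0 0 j)).

Definition in_aff (S : seq pt) (x : pt) : Prop :=
  exists mu : seq R, [/\ size mu = size S,
    \sum_(i < size S) mu`_i = 1 &
    x = \sum_(i < size S) mu`_i *: S`_i].

Definition is_proj (S : seq pt) (Q X : pt) : Prop :=
  in_aff S X /\ forall Y, in_aff S Y -> dot (Q - X) (Y - X) = 0.

Definition is_bary4 (P1 P2 P3 P4 Q : pt) (l : 'I_4 -> R) : Prop :=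
  \sum_(i < 4) l i = 1 /\
  Q = l 0 *: P1 + l 1 *: P2 + l 2 *: P3 + l 3 *: P4.

Definition is_equidistant (S : seq pt) (Q : pt) : Prop :=
  in_aff S Q /\ forall i j, (i < size S)%N -> (j < size S)%N ->
    dist S`_i Q = dist S`_j Q.

Definition maxdist (S : seq pt) (Q : pt) : R :=
  \big[Num.max/0]_(x <- S) dist x Q.

Definition is_SEC_center (S : seq pt) (Q : pt) : Prop :=
  forall Q', maxdist S Q <= maxdist S Q'.

End Geom.

(* Main.v *)
Require Import Defs.
From HB Require Import structures.
From mathcomp Require Import all_boot all_order all_algebra.
From mathcomp Require Import ring lra.
Import Order.TTheory GRing.Theory Num.Theory.
Local Open Scope ring_scope.
Set Implicit Arguments. Unset Strict Implicit.

Section Aux.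
Variables (R : rcfType) (n : nat).
Notation pt := 'rV[R]_n.
Implicit Types u v w : pt.

Lemma dotC u v : dot u v = dot v u.
Proof. by rewrite /dot; apply: eq_bigr => j _; rewrite mulrC. Qed.

Lemma dotDl u v w : dot (u + v) w = dot u w + dot v w.
Proof. by rewrite /dot -big_split; apply: eq_bigr => j _; rewrite !mxE mulrDl. Qed.

Lemma dotZl (a : R) u w : dot (a *: u) w = a * dot u w.
Proof. by rewrite /dot mulr_sumr; apply: eq_bigr => j _; rewrite !mxE mulrA. Qed.

Lemma dotNl u w : dot (- u) w = - dot u w.
Proof. by rewrite -scaleN1r dotZl mulN1r. Qed.

Lemma dotBl u v w : dot (u - v) w = dot u w - dot v w.
Proof. by rewrite dotDl dotNl. Qed.

Lemma dotDr u v w : dot w (u + v) = dot w u + dot w v.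
Proof. by rewrite dotC dotDl !(dotC w). Qed.
Lemma dotZr (a : R) u w : dot w (a *: u) = a * dot w u.
Proof. by rewrite dotC dotZl dotC. Qed.
Lemma dotBr u v w : dot w (u - v) = dot w u - dot w v.
Proof. by rewrite dotC dotBl !(dotC w). Qed.
Lemma dotNr u w : dot w (- u) = - dot w u.
Proof. by rewrite dotC dotNl dotC. Qed.

Lemma dot_ge0 u : 0 <= dot u u.
Proof. by apply: sumr_ge0 => j _; rewrite -expr2 sqr_ge0. Qed.

Lemma dot_eq0 u : dot u u = 0 -> u = 0.
Proof.
move=> h; apply/rowP => j; rewrite mxE.
have H := @psumr_eq0P _ _ predT (fun j => u 0 j * u 0 j).
have := H (fun i _ => ltac:(by rewrite -expr2 sqr_ge0)) h j isT.
by move/eqP; rewrite mulf_eq0 orbb => /eqP.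
Qed.

Lemma dot_CS u v : dot u v ^+ 2 <= dot u u * dot v v.
Proof.
have [v0|vn0] := eqVneq v 0.
  have z : dot u v = 0 /\ dot v v = 0.
    by rewrite v0 /dot; split; apply: big1 => j _; rewrite mxE mulr0.
  by case: z => -> ->; rewrite expr0n /= mulr0.
have hq : 0 < dot v v.
  rewrite lt_def dot_ge0 andbT; apply/eqP => /dot_eq0 h; by rewrite h eqxx in vn0.
have := dot_ge0 (dot v v *: u - dot u v *: v).
rewrite !(dotBl, dotBr, dotZl, dotZr) (dotC v u) => H.
nra.
Qed.

Lemma dist_sq u v : dist u v = Num.sqrt (dot (u - v) (u - v)).
Proof. by []. Qed.

Lemma nd_sub u v : dot (u - v) (u - v) = dot u u - 2 * dot u v + dot v v.
Proof. rewrite !(dotBl, dotBr) (dotC v u); ring. Qed.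

Lemma nd_add u v : dot (u + v) (u + v) = dot u u + 2 * dot u v + dot v v.
Proof. rewrite !(dotDl, dotDr) (dotC v u); ring. Qed.

Lemma tri (A B C O : pt) (a b c : R) :
  a + b + c = 1 -> O = a *: A + b *: B + c *: C ->
  dot (A - O) (A - O) = dot (B - O) (B - O) ->
  dot (B - O) (B - O) = dot (C - O) (C - O) ->
  B != C -> a < 0 ->
  dot (A - 2^-1 *: (B + C)) (A - 2^-1 *: (B + C)) <=
  dot (B - 2^-1 *: (B + C)) (B - 2^-1 *: (B + C)).
Proof.
move=> habc hO h1 h2 hBC ha.
set M := 2^-1 *: (B + C).
set w := A - M; set e := B - M.
have h2n : (2:R) != 0 by rewrite pnatr_eq0.
have eC : C - M = - e.
  apply/rowP => j; rewrite /e /M !mxE; by field; rewrite ?h2n.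
have hz : O - M = a *: w + (b - c) *: e.
  apply/rowP => j; rewrite /e /w /M hO !mxE.
  have -> : c = 1 - a - b by rewrite -habc; ring.
  by field; rewrite ?h2n.
have eA : A - O = w - (O - M) by rewrite /w; apply/rowP => j; rewrite !mxE; ring.
have eB : B - O = e - (O - M) by rewrite /e; apply/rowP => j; rewrite !mxE; ring.
have eC' : C - O = - e - (O - M).
  by rewrite -eC; apply/rowP => j; rewrite !mxE; ring.
rewrite eA eB eC' hz in h1 h2.
rewrite -/w -/e.
have hE : 0 < dot e e.
  rewrite lt_def dot_ge0 andbT; apply/eqP => /dot_eq0 he.
  have hB : B = M by apply: subr0_eq.
  have hC : C = M by apply: subr0_eq; rewrite eC he oppr0.
  by move: hBC; rewrite hB hC eqxx.
have cs := dot_CS w e.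
clearbody w e.
move: h1 h2; rewrite !nd_sub !(dotDl, dotDr, dotZl, dotZr, dotNl, dotNr) ?(dotC e w).
set x := dot w w; set y := dot w e; set E := dot e e.
move=> h1 h2.
have hy : a * y + (b - c) * E = 0.
  have : (a * y + (b - c) * E) * 4 = 0.
    by move/eqP: h2; rewrite -subr_eq0 => /eqP h; rewrite -[RHS]oppr0 -h; ring.
  by move/eqP; rewrite mulf_eq0 pnatr_eq0 orbF => /eqP.
rewrite hy in h1.
have h1' : x - 2 * (a * x + (b - c) * y) = E.
  by move/eqP: h1; rewrite -subr_eq0 => /eqP h; rewrite -[LHS]subr0 -h; ring.
have key : E * (x - E) = 2 * a * (x * E - y ^+ 2).
  apply/eqP; rewrite -subr_eq0; apply/eqP.
  have -> : E * (x - E) - 2 * a * (x * E - y ^+ 2) =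
    2 * y * (a * y + (b - c) * E) + E * (x - 2 * (a * x + (b - c) * y) - E) by ring.
  by rewrite hy h1' subrr !mulr0 addr0.
have t : 0 <= x * E - y ^+ 2 by rewrite subr_ge0.
have t2 : 2 * a * (x * E - y ^+ 2) <= 0.
  by rewrite mulr_le0_ge0 // mulr_ge0_le0 // ltW.
rewrite -key in t2.
by rewrite -subr_le0 -(pmulr_rle0 _ hE).
Qed.

Lemma mid (P3 P4 Q : pt) :
  dot (P3 - Q) (P3 - Q) + dot (P4 - Q) (P4 - Q) =
  2 * dot (P3 - 2^-1 *: (P3 + P4)) (P3 - 2^-1 *: (P3 + P4)) +
  2 * dot (2^-1 *: (P3 + P4) - Q) (2^-1 *: (P3 + P4) - Q).
Proof.
have h2n : (2:R) != 0 by rewrite pnatr_eq0.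
set M := 2^-1 *: (P3 + P4).
set e := P3 - M; set f := M - Q.
have e3 : P3 - Q = e + f by rewrite /e /f; apply/rowP => j; rewrite !mxE; ring.
have e4 : P4 - Q = f - e.
  by rewrite /e /f /M; apply/rowP => j; rewrite !mxE; field; rewrite ?h2n.
rewrite e3 e4; clearbody e f.
rewrite nd_add nd_sub (dotC e f); ring.
Qed.

Lemma mid2 (P3 P4 : pt) :
  dot (P4 - 2^-1 *: (P3 + P4)) (P4 - 2^-1 *: (P3 + P4)) =
  dot (P3 - 2^-1 *: (P3 + P4)) (P3 - 2^-1 *: (P3 + P4)).
Proof.
have h2n : (2:R) != 0 by rewrite pnatr_eq0.
have -> : P4 - 2^-1 *: (P3 + P4) = - (P3 - 2^-1 *: (P3 + P4)).
  by apply/rowP => j; rewrite !mxE; field; rewrite ?h2n.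
by rewrite dotNl dotNr opprK.
Qed.

Lemma gp_uniq (P1 P2 P3 P4 : pt) (k1 k2 k3 k4 : R) :
  general_position [:: P1; P2; P3; P4] -> k1 + k2 + k3 + k4 = 0 ->
  k1 *: P1 + k2 *: P2 + k3 *: P3 + k4 *: P4 = 0 ->
  [/\ k2 = 0, k3 = 0 & k4 = 0].
Proof.
move=> /row_free_inj inj hk hP.
have hk1 : k1 = - (k2 + k3 + k4) by lra.
rewrite hk1 in hP.
have H : \row_(i < 3) [:: k2; k3; k4]`_i = 0.
  apply: (inj 1); rewrite mul0mx; apply/rowP => j.
  have := congr1 (fun M : pt => M 0 j) hP.
  rewrite !mxE /= !big_ord_recl big_ord0 /= !mxE /=.
  by rewrite addr0 => <-; ring.
move/rowP: H => H.
have := H (@Ordinal 3 0 isT); have := H (@Ordinal 3 1 isT);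
  have := H (@Ordinal 3 2 isT); rewrite !mxE /=.
by [].
Qed.

Lemma aff3 (A B C X : pt) : in_aff [:: A; B; C] X ->
  exists m0 m1 m2, m0 + m1 + m2 = 1 /\ X = m0 *: A + m1 *: B + m2 *: C.
Proof.
case=> mu [] hs; case: mu hs => [|m0 [|m1 [|m2 []]]] // _.
rewrite !big_ord_recl !big_ord0 /= => h1 h2.
exists m0; exists m1; exists m2; split; first by rewrite -h1; ring.
by rewrite h2 ?addr0 !addrA.
Qed.

Lemma aff2 (A B X : pt) : in_aff [:: A; B] X ->
  exists m0 m1, m0 + m1 = 1 /\ X = m0 *: A + m1 *: B.
Proof.
case=> mu [] hs; case: mu hs => [|m0 [|m1 []]] // _.
rewrite !big_ord_recl !big_ord0 /= => h1 h2.
exists m0; exists m1; split; first by rewrite -h1; ring.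
by rewrite h2 ?addr0.
Qed.

Lemma aff3_mem (A B C : pt) :
  [/\ in_aff [:: A; B; C] A, in_aff [:: A; B; C] B & in_aff [:: A; B; C] C].
Proof.
split; [exists [:: 1; 0; 0] | exists [:: 0; 1; 0] | exists [:: 0; 0; 1]];
  (split => //; rewrite !big_ord_recl !big_ord0 /=;
   [ring | by rewrite !scale0r !scale1r ?add0r ?addr0]).
Qed.

Lemma aff2_mem (A B : pt) : in_aff [:: A; B] A /\ in_aff [:: A; B] B.
Proof.
split; [exists [:: 1; 0] | exists [:: 0; 1]];
  (split => //; rewrite !big_ord_recl !big_ord0 /=;
   [ring | by rewrite !scale0r !scale1r ?add0r ?addr0]).
Qed.

Lemma proj_eq (S : seq pt) (Q X Y : pt) : is_proj S Q X -> in_aff S Y ->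
  dot (Y - X) (Y - X) = dot (Y - Q) (Y - Q) - dot (Q - X) (Q - X).
Proof.
case=> _ hp hY.
have -> : Y - Q = (Y - X) - (Q - X) by apply/rowP => j; rewrite !mxE; ring.
by rewrite (nd_sub (Y - X) (Q - X)) (dotC (Y - X) (Q - X)) (hp _ hY); ring.
Qed.

Lemma dist_dot (x y Q : pt) : dist x Q = dist y Q ->
  dot (x - Q) (x - Q) = dot (y - Q) (y - Q).
Proof. by rewrite /dist => /eqP; rewrite eqr_sqrt ?dot_ge0 // => /eqP. Qed.

Lemma sum4 (l : 'I_4 -> R) : \sum_(i < 4) l i = l 0 + l 1 + l 2 + l 3.
Proof.
rewrite !big_ord_recl big_ord0 addr0 !addrA.
by congr (_ + _ + _ + _); congr l; apply/val_inj.
Qed.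

Lemma comb0 (P1 P2 P3 P4 X : pt) (a1 a2 a3 a4 b1 b2 b3 b4 : R) :
  X = a1 *: P1 + a2 *: P2 + a3 *: P3 + a4 *: P4 ->
  X = b1 *: P1 + b2 *: P2 + b3 *: P3 + b4 *: P4 ->
  (a1 - b1) *: P1 + (a2 - b2) *: P2 + (a3 - b3) *: P3 + (a4 - b4) *: P4 = 0.
Proof.
move=> h1 h2; apply/rowP => j.
have := congr1 (fun M : pt => M 0 j) h1; have := congr1 (fun M : pt => M 0 j) h2.
rewrite !mxE => e2 e1.
rewrite -(subrr (X 0 j)) {1}e1 e2; ring.
Qed.

End Aux.

Theorem theorem10 (R : rcfType) (n : nat) (P1 P2 P3 P4 : 'rV[R]_n)
  (Q0 Q11 Q12 Q2 : 'rV[R]_n) (l0 l11 l12 : 'I_4 -> R) :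
  general_position [:: P1; P2; P3; P4] ->
  is_equidistant [:: P1; P2; P3; P4] Q0 ->
  is_bary4 P1 P2 P3 P4 Q0 l0 ->
  l0 0 < 0 -> l0 1 < 0 -> 0 <= l0 2 -> 0 <= l0 3 ->
  is_proj [:: P2; P3; P4] Q0 Q11 ->
  is_proj [:: P1; P3; P4] Q0 Q12 ->
  is_bary4 P1 P2 P3 P4 Q11 l11 ->
  is_bary4 P1 P2 P3 P4 Q12 l12 ->
  l12 0 < 0 ->
  l11 1 < 0 -> 0 <= l11 2 -> 0 <= l11 3 ->
  is_proj [:: P3; P4] Q11 Q2 ->
  [/\ is_SEC_center [:: P1; P2; P3; P4] Q2,
      (forall Q, is_SEC_center [:: P1; P2; P3; P4] Q -> Q = Q2) &
      maxdist [:: P1; P2; P3; P4] Q2 = dist P3 Q2].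
Proof.
move=> gp [_ heq] _ _ _ _ _ hp11 hp12 [s11 b11] [s12 b12] hl12 hl11 _ _ hp2.
have h2n : (2:R) != 0 by rewrite pnatr_eq0.
have e12 := dist_dot (heq 0%N 1%N isT isT).
have e13 := dist_dot (heq 0%N 2%N isT isT).
have e14 := dist_dot (heq 0%N 3%N isT isT).
rewrite /= in e12 e13 e14.
have n34 : P3 != P4.
  apply/eqP => e.
  have := @gp_uniq _ _ P1 P2 P3 P4 0 0 1 (-1) gp.
  case.
  - lra.
  - by rewrite e !scale0r !add0r scale1r scaleN1r subrr.
  - by move=> _ /eqP; rewrite oner_eq0.
rewrite sum4 in s11; rewrite sum4 in s12.
have [m0 [m1 [m2 [sm em]]]] := aff3 hp11.1.
have em' : Q11 = 0 *: P1 + m0 *: P2 + m1 *: P3 + m2 *: P4 by rewrite scale0r add0r.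
have hm0 : l11 1 = m0.
  have := gp_uniq (k1 := l11 0 - 0) (k2 := l11 1 - m0) (k3 := l11 2 - m1) (k4 := l11 3 - m2) gp.
  case.
  - lra.
  - exact: comb0 b11 em'.
  - move=> h _ _; lra.
have [r0 [r1 [r2 [sr er]]]] := aff3 hp12.1.
have er' : Q12 = r0 *: P1 + 0 *: P2 + r1 *: P3 + r2 *: P4 by rewrite scale0r addr0.
have hr0 : l12 0 = r0.
  have := gp_uniq (k1 := l12 0 - r0) (k2 := l12 1 - 0) (k3 := l12 2 - r1) (k4 := l12 3 - r2) gp.
  case.
  - lra.
  - exact: comb0 b12 er'.
  - move=> h h' h''; lra.
have [a2 a3 a4] := aff3_mem P2 P3 P4.
have [c1 c3 c4] := aff3_mem P1 P3 P4.
have d2 := proj_eq hp11 a2; have d3 := proj_eq hp11 a3; have d4 := proj_eq hp11 a4.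
have f1 := proj_eq hp12 c1; have f3 := proj_eq hp12 c3; have f4 := proj_eq hp12 c4.
have q23 : dot (P2 - Q11) (P2 - Q11) = dot (P3 - Q11) (P3 - Q11).
  by rewrite d2 d3 -e12 -e13.
have q34 : dot (P3 - Q11) (P3 - Q11) = dot (P4 - Q11) (P4 - Q11).
  by rewrite d4 d3 -e13 -e14.
have g13 : dot (P1 - Q12) (P1 - Q12) = dot (P3 - Q12) (P3 - Q12).
  by rewrite f1 f3 -e13.
have g34 : dot (P3 - Q12) (P3 - Q12) = dot (P4 - Q12) (P4 - Q12).
  by rewrite f4 f3 -e13 -e14.
have [t0 [t1 [st et]]] := aff2 hp2.1.
have [b3 b4] := aff2_mem P3 P4.
have w34 : dot (P3 - Q2) (P3 - Q2) = dot (P4 - Q2) (P4 - Q2).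
  by rewrite (proj_eq hp2 b3) (proj_eq hp2 b4) q34.
have hD : 0 < dot (P3 - P4) (P3 - P4).
  rewrite lt_def dot_ge0 andbT; apply/eqP => /dot_eq0 /subr0_eq h.
  by rewrite h eqxx in n34.
have v3 : P3 - Q2 = t1 *: (P3 - P4).
  rewrite et; apply/rowP => j; rewrite !mxE.
  have -> : t0 = 1 - t1 by lra.
  ring.
have v4 : P4 - Q2 = (- t0) *: (P3 - P4).
  rewrite et; apply/rowP => j; rewrite !mxE.
  have -> : t1 = 1 - t0 by lra.
  ring.
rewrite v3 v4 !(dotZl, dotZr) in w34.
have tt : t0 = t1.
  have : (t1 - t0) * ((t0 + t1) * dot (P3 - P4) (P3 - P4)) = 0.
    rewrite -[RHS](subrr (t1 * (t1 * dot (P3 - P4) (P3 - P4)))) {2}w34; ring.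
  rewrite st mul1r => /eqP; rewrite mulf_eq0 (gt_eqF hD) orbF subr_eq0 => /eqP.
  by move=> ->.
have hQ2 : Q2 = 2^-1 *: (P3 + P4).
  rewrite et; apply/rowP => j; rewrite !mxE.
  have h0 : t0 = 2^-1 by rewrite -tt in st; apply: (mulfI h2n); rewrite mulfV // -[RHS]st; ring.
  have h1 : t1 = 2^-1 by rewrite -tt.
  rewrite h0 h1; ring.
clear v3 v4 w34 et.
have i1 : dot (P1 - 2^-1 *: (P3 + P4)) (P1 - 2^-1 *: (P3 + P4)) <=
  dot (P3 - 2^-1 *: (P3 + P4)) (P3 - 2^-1 *: (P3 + P4)).
  by apply: (tri sr er g13 g34 n34); rewrite -hr0.
have i2 : dot (P2 - 2^-1 *: (P3 + P4)) (P2 - 2^-1 *: (P3 + P4)) <=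
  dot (P3 - 2^-1 *: (P3 + P4)) (P3 - 2^-1 *: (P3 + P4)).
  by apply: (tri sm em q23 q34 n34); rewrite -hm0.
rewrite hQ2.
have i4 := mid2 P3 P4.
set M := 2^-1 *: (P3 + P4) in i1 i2 i4 *.
set D := dot (P3 - M) (P3 - M) in i1 i2 i4 *.
have D0 : 0 <= D by apply: dot_ge0.
have dle : forall x, dot (x - M) (x - M) <= D -> dist x M <= dist P3 M.
  by move=> x h; rewrite /dist ler_sqrt.
have i4l : dot (P4 - M) (P4 - M) <= D by rewrite i4.
have mxM : maxdist [:: P1; P2; P3; P4] M = dist P3 M.
  rewrite /maxdist !big_cons big_nil; apply/le_anti/andP; split.
  - by rewrite !ge_max (dle _ i1) (dle _ i2) lexx (dle _ i4l) sqrtr_ge0.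
  - by rewrite !le_max lexx !orbT.
have hmax : forall Q, dist P3 Q <= maxdist [:: P1; P2; P3; P4] Q /\
                      dist P4 Q <= maxdist [:: P1; P2; P3; P4] Q.
  by move=> Q; rewrite /maxdist !big_cons big_nil !le_max !lexx !orbT.
split.
- move=> Q'; rewrite mxM; have [h3 h4] := hmax Q'.
  have m := mid P3 P4 Q'; rewrite -/M -/D in m.
  have g := dot_ge0 (M - Q').
  case: (leP (dot (P4 - Q') (P4 - Q')) (dot (P3 - Q') (P3 - Q'))) => h.
  + apply: le_trans h3; rewrite /dist ler_sqrt ?dot_ge0 //; rewrite -/D; lra.
  + apply: le_trans h4; rewrite /dist ler_sqrt ?dot_ge0 //; rewrite -/D; lra.
- move=> Q hQ; have := hQ M; rewrite mxM => hle; have [h3 h4] := hmax Q.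
  move: (le_trans h3 hle) (le_trans h4 hle); rewrite /dist !ler_sqrt // => n3 n4; rewrite -/D in n3 n4.
  have m := mid P3 P4 Q; rewrite -/M -/D in m.
  have g := dot_ge0 (M - Q).
  have z : dot (M - Q) (M - Q) = 0 by lra.
  by rewrite (subr0_eq (dot_eq0 z)).
- exact: mxM.
Qed.
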